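(* Let $s\in(0,1)$ and let $F\in\mathcal M_s$ be an even function. Suppose that for some $\gamma>0$ one has $\int_\gamma F(x)x^{2k}=0$ for all $k\in\mathbb Z_{\ge0}$. Then $F=0$.
   Context: Fix $q\in(0,1)$. Notation: $(a;q)_\infty=\prod_{j\ge0}(1-aq^j)$, $e_q(x)=1/(x;q)_\infty$. For $\gamma>0$, $\int_\gamma f=(1-q)\sum_{k\in\mathbb Z}\sum_{\epsilon=\pm1}q^k\gamma f(\epsilon q^k\gamma)$ whenever absolutely convergent. For $s>0$, $\mathcal M_s$ is the set of functions $F(x)=f(x)e_{q^2}(-x^2)$ (holomorphic on $|\mathrm{Im}\,x|<1$) where $f(x)=\sum_{l\ge0}a_lx^l$ with $|a_l|\le Cs^lq^{l^2/2}$ for all $l$, for some $C>0$. *)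

(* Defs.v *)
From Stdlib Require Import Reals ZArith.
From Coquelicot Require Import Coquelicot.
Open Scope R_scope.

Fixpoint cpow (x : C) (n : nat) : C :=
  match n with O => RtoC 1 | S n => Cmult x (cpow x n) end.

Fixpoint qpoch_partial (a : C) (q : R) (n : nat) : C :=
  match n with
  | O => RtoC 1
  | S n => Cmult (qpoch_partial a q n) (Cminus (RtoC 1) (Cmult a (RtoC (q ^ n))))
  end.

(* [e_{q}(x) = v]  :  v = 1/(x;q)_oo, the infinite product being the limit
   of the partial products. *)
Definition is_eq (q : R) (x : C) (v : C) : Prop :=
  exists p : C,
    filterlim (qpoch_partial x q) eventually (locally p) /\ v = Cinv p.

(* Membership of F in M_s: F(x) = f(x) e_{q^2}(-x^2) on the strip |Im x| < 1,
   with f(x) = sum_l a_l x^l and |a_l| <= C s^l q^(l^2/2). *)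
Definition in_M (q s : R) (F : C -> C) : Prop :=
  exists (a : nat -> C) (Cst : R),
    0 < Cst /\
    (forall l : nat, Cmod (a l) <= Cst * s ^ l * Rpower q (INR l ^ 2 / 2)) /\
    forall x : C, Rabs (Im x) < 1 ->
      exists fx ex : C,
        is_series (fun l => Cmult (a l) (cpow x l)) fx /\
        is_eq (q ^ 2) (Copp (cpow x 2)) ex /\
        F x = Cmult fx ex.

(* The Jackson-type integral  int_gamma h = (1-q) sum_{k in Z} sum_{eps=+-1}
   q^k gamma h(eps q^k gamma), required to be absolutely convergent. *)
Definition jpt (q gamma : R) (k : Z) : R := powerRZ q k * gamma.

Definition jterm (q gamma : R) (h : R -> C) (k : Z) : C :=
  Cmult (RtoC ((1 - q) * jpt q gamma k))
        (Cplus (h (jpt q gamma k)) (h (- jpt q gamma k))).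

Definition jackson_abs_conv (q gamma : R) (h : R -> C) : Prop :=
  forall eps : R, (eps = 1 \/ eps = -1) ->
    ex_series (fun n : nat => jpt q gamma (Z.of_nat n) *
                              Cmod (h (eps * jpt q gamma (Z.of_nat n)))) /\
    ex_series (fun n : nat => jpt q gamma (- Z.of_nat (S n)) *
                              Cmod (h (eps * jpt q gamma (- Z.of_nat (S n))))).

Definition jackson_integral_is (q gamma : R) (h : R -> C) (v : C) : Prop :=
  jackson_abs_conv q gamma h /\
  is_series (fun n : nat => Cplus (jterm q gamma h (Z.of_nat n))
                                  (jterm q gamma h (- Z.of_nat (S n)))) v.

(* Main.v *)
Require Import Defs.
From Stdlib Require Import Reals ZArith.
From Stdlib Require Import Lra Lia Arith.
From Coquelicot Require Import Coquelicot.
Open Scope R_scope.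


Lemma isR_lin (a b : nat -> R) la lb c d :
  is_series a la -> is_series b lb ->
  is_series (fun n => c * a n + d * b n) (c * la + d * lb).
Proof.
  intros Ha Hb.
  exact (is_series_plus _ _ _ _ (is_series_scal c _ _ Ha) (is_series_scal d _ _ Hb)).
Qed.

Lemma isR_scal (a : nat -> R) la c :
  is_series a la -> is_series (fun n => c * a n) (c * la).
Proof. intros Ha. exact (is_series_scal c _ _ Ha). Qed.

Lemma isR_ext (a b : nat -> R) l : (forall n, a n = b n) -> is_series a l -> is_series b l.
Proof. apply is_series_ext. Qed.

Lemma exp_mono x y : x <= y -> exp x <= exp y.
Proof. intros H. destruct (Rle_lt_or_eq_dec _ _ H) as [H1|H1].
  left; apply exp_increasing; auto. subst; lra. Qed.

Lemma pow_le_one_r (r : R) n : 0 <= r <= 1 -> r ^ n <= 1.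
Proof. intros Hr. induction n; simpl. lra.
  pose proof (pow_le r n (proj1 Hr)). nra. Qed.

Lemma pow_le_r (r : R) (m n : nat) : 0 <= r <= 1 -> (m <= n)%nat -> r ^ n <= r ^ m.
Proof.
  intros Hr Hmn. replace n with (m + (n - m))%nat by lia.
  rewrite pow_add. pose proof (pow_le r m (proj1 Hr)).
  pose proof (pow_le_one_r r (n - m) Hr). nra.
Qed.

Section LZ.
Variable r : R.
Hypothesis Hr : 0 < r < 1.
Let x := (/ r) ^ 2.

Lemma x_gt1 : 1 < x.
Proof. unfold x. assert (1 < / r). { rewrite <- Rinv_1. apply Rinv_lt_contravar; lra. }
  simpl. nra. Qed.

Lemma x_pow k : x ^ k = / (r ^ (2 * k)).
Proof. unfold x. rewrite <- pow_mult, pow_inv. reflexivity. Qed.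

Fixpoint piZ (n j : nat) : R :=
  match n with
  | O => 1
  | S n => piZ n j * ((x ^ j - x ^ (S n)) / (x ^ (S n) - 1))
  end.

Lemma xpow_gt1 k : (1 <= k)%nat -> 1 < x ^ k.
Proof. intros Hk. pose proof x_gt1. destruct k. lia.
  induction k. simpl; lra. 
  assert (1 < x ^ S k) by (apply IHk; lia). simpl in *. nra. Qed.

Lemma psi_series (beta : nat -> R) :
  (forall i, is_series (fun j => beta j * x ^ (i * j)) 0) ->
  forall n i, is_series (fun j => beta j * piZ n j * x ^ (i * j)) 0.
Proof.
  intros H0 n. induction n; intros i.
  - eapply isR_ext; [| apply (H0 i)]. intros j; simpl; ring.
  - pose proof (xpow_gt1 (S n) ltac:(lia)) as Hx.
    pose proof (isR_lin _ _ _ _ (/ (x ^ S n - 1)) (- x ^ S n / (x ^ S n - 1)) (IHn (S i)) (IHn i)) as H.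
    replace (/ (x ^ S n - 1) * 0 + - x ^ S n / (x ^ S n - 1) * 0) with 0 in H by ring.
    eapply isR_ext; [| exact H]. intros j. cbv beta. simpl piZ.
    replace (S i * j)%nat with (i * j + j)%nat by lia. rewrite pow_add.
    simpl pow. field. simpl in Hx. lra.
Qed.

Lemma piZ_0 n : Rabs (piZ n 0) = 1.
Proof. induction n; simpl piZ. rewrite Rabs_R1; auto.
  pose proof (xpow_gt1 (S n) ltac:(lia)).
  rewrite Rabs_mult, IHn. simpl pow in *. replace ((1 - x * x ^ n) / (x * x ^ n - 1)) with (- (1)).
  rewrite Rabs_Ropp, Rabs_R1; ring. field. lra. Qed.

Lemma piZ_zero n j : (1 <= j <= n)%nat -> piZ n j = 0.
Proof. induction n; intros Hj. lia. simpl piZ.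
  destruct (Nat.eq_dec j (S n)). subst. simpl pow. unfold Rdiv. ring.
  rewrite IHn by lia. ring. Qed.

Fixpoint Tz (n : nat) : R := match n with O => 0 | S n => Tz n + r ^ (2 * S n) end.

Lemma Tz_S n : Tz (S n) = Tz n + r ^ (2 * S n).
Proof. reflexivity. Qed.

Lemma Tz_bound n : Tz n <= 1 / (1 - r ^ 2).
Proof.
  assert (E : Tz n * (1 - r ^ 2) = r ^ 2 - r ^ (2 * S n)).
  { induction n. simpl; ring. rewrite Tz_S, Rmult_plus_distr_r, IHn.
    replace (2 * S (S n))%nat with (2 * S n + 2)%nat by lia. rewrite pow_add. ring. }
  assert (0 < 1 - r^2) by (simpl; nra).
  pose proof (pow_le r (2 * S n) ltac:(lra)).
  assert (r ^ 2 <= 1) by (simpl; nra).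
  apply (Rmult_le_reg_r (1 - r^2)); auto. rewrite E. field_simplify; lra.
Qed.

Lemma factor_bound j k : (1 <= k < j)%nat ->
  0 <= (x ^ j - x ^ k) / (x ^ k - 1) <=
  (/ r) ^ (2 * j) * r ^ (2 * k) * exp (r ^ (2 * k) / (1 - r ^ 2)).
Proof.
  intros Hk. set (a := r ^ (2 * k)).
  assert (Ha0 : 0 < a) by (apply pow_lt; lra).
  assert (Ha1 : a <= r ^ 2).
  { unfold a. apply pow_le_r; [lra|lia]. }
  assert (Hr2 : r ^ 2 < 1) by (simpl; nra).
  assert (Exk : x ^ k = / a) by (apply x_pow).
  assert (Exj : x ^ j = (/ r) ^ (2 * j)) by (unfold x; rewrite <- pow_mult; reflexivity).
  rewrite <- Exj.
  assert (Hkj : x ^ k <= x ^ j) by (apply Rle_pow; [pose proof x_gt1; lra| lia]).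
  assert (Hk1 : 1 < x ^ k) by (apply xpow_gt1; lia).
  split. apply Rdiv_le_0_compat; lra.
  assert (E1 : (x ^ j - x ^ k) / (x ^ k - 1) <= x ^ j * a / (1 - a)).
  { rewrite Exk in *. assert (a < 1) by lra.
    apply (Rmult_le_reg_r (/ a - 1)); [lra|].
    unfold Rdiv. rewrite Rmult_assoc, Rinv_l by lra.
    replace (x ^ j * a * / (1 - a) * (/ a - 1)) with (x ^ j) by (field; lra).
    assert (0 < / a) by (apply Rinv_0_lt_compat; lra). lra. }
  assert (E2 : 1 / (1 - a) <= exp (a / (1 - r ^ 2))).
  { eapply Rle_trans; [| apply exp_mono with (x := a / (1 - a))].
    - pose proof (exp_ineq1_le (a / (1 - a))).
      replace (1 / (1 - a)) with (1 + a / (1 - a)) by (field; lra). lra.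
    - apply Rmult_le_compat_l; [lra|]. apply Rinv_le_contravar; lra. }
  eapply Rle_trans; [exact E1|].
  pose proof (pow_le x j ltac:(pose proof x_gt1; lra)).
  replace (x ^ j * a / (1 - a)) with (x ^ j * a * (1 / (1 - a))) by (field; lra).
  apply Rmult_le_compat_l; [nra| exact E2].
Qed.

Lemma piZ_bound n j : (n < j)%nat ->
  Rabs (piZ n j) <= (/ r) ^ (2 * j * n) * r ^ (n * (n + 1)) * exp (Tz n / (1 - r ^ 2)).
Proof.
  induction n; intros Hj.
  - simpl piZ. rewrite Rabs_R1. replace (2 * j * 0)%nat with 0%nat by lia. simpl Tz.
    unfold Rdiv. rewrite Rmult_0_l, exp_0. simpl. lra.
  - simpl piZ. rewrite Rabs_mult. pose proof (factor_bound j (S n) ltac:(lia)) as [F0 F1].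
    rewrite (Rabs_pos_eq (_ / _)) by exact F0.
    specialize (IHn ltac:(lia)).
    eapply Rle_trans. apply Rmult_le_compat; [apply Rabs_pos| exact F0| exact IHn| exact F1].
    replace (2 * j * S n)%nat with (2 * j * n + 2 * j)%nat by lia.
    replace (S n * (S n + 1))%nat with (n * (n + 1) + 2 * S n)%nat by lia.
    rewrite Tz_S, !pow_add.
    replace ((Tz n + r ^ (2 * S n)) / (1 - r ^ 2)) with (Tz n / (1 - r^2) + r ^ (2 * S n) / (1 - r^2)) by (unfold Rdiv; ring).
    rewrite exp_plus. right; ring.
Qed.

Lemma Z0 (A : R) (beta : nat -> R) :
  (forall j, Rabs (beta j) <= A * r ^ (j * j)) ->
  (forall i, is_series (fun j => beta j * x ^ (i * j)) 0) ->
  beta 0%nat = 0.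
Proof.
  intros HA H0.
  set (K := exp (1 / (1 - r ^ 2) / (1 - r ^ 2))).
  assert (Hr2 : 0 < 1 - r ^ 2) by (simpl; nra).
  assert (HK : forall n, exp (Tz n / (1 - r ^ 2)) <= K).
  { intros n. apply exp_mono. unfold Rdiv. apply Rmult_le_compat_r.
    left; apply Rinv_0_lt_compat; auto. pose proof (Tz_bound n). unfold Rdiv in H. lra. }
  assert (HA0 : 0 <= A).
  { specialize (HA 0%nat). simpl in HA. pose proof (Rabs_pos (beta 0%nat)). lra. }
  assert (Bound : forall n, Rabs (beta 0%nat) <= A * K * r ^ (S n) / (1 - r)).
  { intros n.
    pose proof (psi_series beta H0 n 0) as Hs.
    set (u := fun j => beta j * piZ n j) in *.
    assert (Hs' : is_series u 0).
    { eapply isR_ext; [| exact Hs]. intros j. simpl. unfold u. ring. }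
    assert (Hsum : sum_n u n = u 0%nat).
    { assert (forall m, (m <= n)%nat -> sum_n u m = u 0%nat).
      { induction m; intros Hm. apply sum_O. rewrite sum_Sn, IHm by lia.
        unfold u. rewrite (piZ_zero n (S m)) by lia. change (plus (beta 0%nat * piZ n 0) (beta (S m) * 0) = beta 0%nat * piZ n 0).
        unfold plus; simpl. ring. }
      apply H; lia. }
    assert (Htail : is_series (fun k => u (S n + k)%nat) (- u 0%nat)).
    { apply is_series_incr_n. lia. replace (Init.Nat.pred (S n)) with n by reflexivity.
      assert (E : plus (- u 0%nat) (sum_n u n) = 0) by (rewrite Hsum; unfold plus; simpl; ring).
      eapply (eq_ind 0 (fun v => is_series u v)); [exact Hs'| exact (eq_sym E)]. }
    set (w := fun k => A * K * r ^ (S n) * r ^ k).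
    assert (Hw : is_series w (A * K * r ^ (S n) * / (1 - r))).
    { apply isR_scal. apply is_series_geom. rewrite Rabs_pos_eq; lra. }
    assert (Hle : forall k, Rabs (u (S n + k)%nat) <= w k).
    { intros k. unfold u, w. rewrite Rabs_mult.
      set (j := (S n + k)%nat).
      pose proof (piZ_bound n j ltac:(unfold j; lia)) as Hp.
      eapply Rle_trans. apply Rmult_le_compat; [apply Rabs_pos| apply Rabs_pos| apply HA| exact Hp].
      assert (HKn := HK n).
      assert (P1 : 0 <= (/ r) ^ (2 * j * n) * r ^ (n * (n + 1))).
      { apply Rmult_le_pos; apply pow_le; [left; apply Rinv_0_lt_compat|]; lra. }
      assert (Hexp : 0 <= exp (Tz n / (1 - r ^ 2))) by (left; apply exp_pos).
      assert (KEY : r ^ (j * j) * ((/ r) ^ (2 * j * n) * r ^ (n * (n + 1))) <= r ^ j).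
      { rewrite pow_inv.
        assert (Hrr : r ^ (j * j + n * (n + 1)) <= r ^ (j + 2 * j * n)).
        { apply pow_le_r. lra. unfold j. nia. }
        rewrite !pow_add in Hrr.
        assert (0 < r ^ (2 * j * n)) by (apply pow_lt; lra).
        apply (Rmult_le_reg_r (r ^ (2 * j * n))); auto.
        replace (r ^ (j * j) * (/ r ^ (2 * j * n) * r ^ (n * (n + 1))) * r ^ (2 * j * n))
          with (r ^ (j * j) * r ^ (n * (n + 1))) by (field; lra). lra. }
      replace (r ^ j) with (r ^ S n * r ^ k) in KEY by (unfold j; rewrite pow_add; reflexivity).
      pose proof (pow_le r (j*j) ltac:(lra)).
      assert (A * r ^ (j * j) * ((/ r) ^ (2 * j * n) * r ^ (n * (n + 1)) * exp (Tz n / (1 - r ^ 2)))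
              <= A * (r ^ S n * r ^ k) * K).
      { replace (A * r ^ (j * j) * ((/ r) ^ (2 * j * n) * r ^ (n * (n + 1)) * exp (Tz n / (1 - r ^ 2))))
          with (A * (r ^ (j * j) * ((/ r) ^ (2 * j * n) * r ^ (n * (n + 1)))) * exp (Tz n / (1 - r ^ 2))) by ring.
        apply Rmult_le_compat; try nra. apply Rmult_le_pos; nra. }
      lra. }
    assert (Hex : ex_series (fun k => Rabs (u (S n + k)%nat))).
    { apply (@ex_series_le R_AbsRing R_CompleteNormedModule _ w).
      intros k. change (Rabs (Rabs (u (S n + k)%nat)) <= w k). rewrite Rabs_Rabsolu. apply Hle.
      exists (A * K * r ^ S n * / (1 - r)); exact Hw. }
    pose proof (Series_Rabs _ Hex) as HSR.
    rewrite (is_series_unique _ _ Htail) in HSR.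
    pose proof (Series_le _ w (fun k => conj (Rabs_pos _) (Hle k)) (ex_intro _ _ Hw)) as HSl.
    rewrite (is_series_unique _ _ Hw) in HSl.
    assert (Rabs (u 0%nat) = Rabs (beta 0%nat)) by (unfold u; rewrite Rabs_mult, piZ_0; ring).
    rewrite Rabs_Ropp in HSR. unfold Rdiv. lra. }
  set (c := A * K / (1 - r)).
  assert (Hc : 0 <= c).
  { unfold c. apply Rmult_le_pos. apply Rmult_le_pos; [lra| left; apply exp_pos].
    left; apply Rinv_0_lt_compat; lra. }
  destruct (Req_dec (beta 0%nat) 0) as [E|E]; auto.
  exfalso. assert (Hb : 0 < Rabs (beta 0%nat)) by (apply Rabs_pos_lt; auto).
  destruct (pow_lt_1_zero r ltac:(rewrite Rabs_pos_eq; lra) (Rabs (beta 0%nat) / (c + 1))) as [N HN].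
  { apply Rdiv_lt_0_compat; lra. }
  specialize (HN (S N) ltac:(lia)). rewrite Rabs_pos_eq in HN by (apply pow_le; lra).
  specialize (Bound N).
  replace (A * K * r ^ S N / (1 - r)) with (c * r ^ S N) in Bound by (unfold c; field; lra).
  assert (c * r ^ S N <= c * (Rabs (beta 0%nat) / (c + 1))) by (apply Rmult_le_compat_l; lra).
  assert (c * (Rabs (beta 0%nat) / (c + 1)) < Rabs (beta 0%nat)).
  { apply (Rmult_lt_reg_r (c + 1)); [lra|]. field_simplify; nra. }
  lra.
Qed.

Lemma Zall (A : R) (beta : nat -> R) :
  (forall j, Rabs (beta j) <= A * r ^ (j * j)) ->
  (forall i, is_series (fun j => beta j * x ^ (i * j)) 0) ->
  forall m, beta m = 0.
Proof.
  intros HA H0.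
  assert (forall m, forall p, (p <= m)%nat -> beta p = 0); [| intros m; apply (H m m); lia].
  induction m; intros p Hp.
  - replace p with 0%nat by lia. exact (Z0 A beta HA H0).
  - destruct (Nat.eq_dec p (S m)); [subst| apply IHm; lia].
    set (b' := fun j => beta (S m + j)%nat).
    assert (HA' : forall j, Rabs (b' j) <= A * r ^ (j * j)).
    { intros j. unfold b'. eapply Rle_trans; [apply HA|].
      assert (0 <= A). { specialize (HA 0%nat). simpl in HA. pose proof (Rabs_pos (beta 0%nat)). lra. }
      apply Rmult_le_compat_l; auto. apply pow_le_r; [lra| nia]. }
    assert (H0' : forall i, is_series (fun j => b' j * x ^ (i * j)) 0).
    { intros i.
      assert (Hsum : forall k, (k <= m)%nat -> sum_n (fun j => beta j * x ^ (i * j)) k = 0).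
      { induction k; intros Hk. rewrite sum_O. rewrite (IHm 0%nat) by lia. apply Rmult_0_l.
        rewrite sum_Sn, IHk by lia. rewrite (IHm (S k)) by lia. unfold plus; simpl. rewrite Rmult_0_l. apply Rplus_0_r. }
      pose proof (is_series_incr_n (fun j => beta j * x ^ (i * j)) (S m) 0 ltac:(lia)) as Hn.
      assert (E : plus 0 (sum_n (fun j => beta j * x ^ (i * j)) (Init.Nat.pred (S m))) = 0).
      { simpl pred. rewrite Hsum by lia. unfold plus; simpl; ring. }
      specialize (Hn (eq_ind_r (fun v => is_series _ v) (H0 i) E)).
      pose proof (isR_scal _ _ (/ x ^ (i * S m)) Hn) as Hn'.
      rewrite Rmult_0_r in Hn'.
      eapply isR_ext; [| exact Hn']. intros j. cbv beta. unfold b'.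
      replace (i * (S m + j))%nat with (i * S m + i * j)%nat by lia. rewrite pow_add.
      assert (0 < x ^ (i * S m)) by (apply pow_lt; pose proof x_gt1; lra).
      field. lra. }
    pose proof (Z0 A b' HA' H0') as Z. unfold b' in Z. rewrite Nat.add_0_r in Z. exact Z.
Qed.
End LZ.


Lemma iss_lim (a : nat -> R) (l : R) : is_series a l <-> is_lim_seq (fun N => sum_n a N) l.
Proof. split; intros H; exact H. Qed.

Lemma sumn_S (a : nat -> R) N : sum_n a (S N) = sum_n a N + a (S N).
Proof. rewrite sum_Sn. reflexivity. Qed.

Lemma sumn_O (a : nat -> R) : sum_n a 0 = a 0%nat.
Proof. apply sum_O. Qed.

Lemma sumn_ext (a b : nat -> R) N : (forall n, a n = b n) -> sum_n a N = sum_n b N.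
Proof. apply sum_n_ext. Qed.

Lemma Series_tail (a : nat -> R) N : ex_series a ->
  Series (fun k => a (S N + k)%nat) = Series a - sum_n a N.
Proof. intros H. rewrite (Series_incr_n a (S N)) by (auto; lia). simpl pred.
  rewrite sum_n_Reals. ring. Qed.

Lemma ex_series_tail (a : nat -> R) N : ex_series a -> ex_series (fun k => a (S N + k)%nat).
Proof. intros [l H]. exists (l - sum_n a N). apply is_series_incr_n. lia.
  simpl pred. assert (E : l - sum_n a N + sum_n a N = l) by ring.
  eapply (eq_ind _ (fun v => is_series a v)); [exact H| exact (eq_sym E)]. Qed.

Lemma Series_nonneg (a : nat -> R) : (forall n, 0 <= a n) -> ex_series a -> 0 <= Series a.
Proof. intros H1 H2. assert (Series (fun n => 0 * a n) <= Series a).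
  { apply Series_le; auto. intros n; specialize (H1 n); split; lra. }
  rewrite Series_scal_l in H. lra. Qed.

Lemma tail_lim (a : nat -> R) : ex_series a ->
  is_lim_seq (fun N => Series (fun k => a (S N + k)%nat)) 0.
Proof. intros H. eapply is_lim_seq_ext. intros N; symmetry; apply Series_tail; auto.
  replace (Finite 0) with (Finite (Series a - Series a)) by (f_equal; ring).
  apply is_lim_seq_minus'. apply is_lim_seq_const. apply iss_lim. apply Series_correct; auto.
Qed.

Lemma is_lim_sum_n (f : nat -> nat -> R) J :
  (forall j, is_lim_seq (fun N => f N j) 0) -> is_lim_seq (fun N => sum_n (f N) J) 0.
Proof. intros H. induction J.
  - eapply is_lim_seq_ext. intros N; symmetry; exact (sumn_O (f N)). apply H.
  - eapply is_lim_seq_ext. intros N; symmetry; exact (sumn_S (f N) J).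
    replace (Finite 0) with (Finite (0 + 0)) by (f_equal; ring).
    apply is_lim_seq_plus'; auto.
Qed.

Lemma sum_n_nonneg (a : nat -> R) N : (forall n, 0 <= a n) -> 0 <= sum_n a N.
Proof. intros H. induction N. rewrite sumn_O; auto. rewrite sumn_S. pose proof (H (S N)); lra. Qed.

Lemma dct_series (f : nat -> nat -> R) (c : nat -> R) :
  (forall N j, 0 <= f N j <= c j) -> ex_series c ->
  (forall j, is_lim_seq (fun N => f N j) 0) ->
  is_lim_seq (fun N => Series (f N)) 0.
Proof.
  intros Hf Hc Hl.
  assert (Hex : forall N, ex_series (f N)).
  { intros N. apply (@ex_series_le R_AbsRing R_CompleteNormedModule _ c); auto.
    intros j. change (Rabs (f N j) <= c j). rewrite Rabs_pos_eq; apply Hf. }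
  apply is_lim_seq_spec. intros eps.
  pose proof (tail_lim c Hc) as Ht. apply is_lim_seq_spec in Ht.
  destruct (Ht (pos_div_2 eps)) as [J HJ]. specialize (HJ J (Nat.le_refl _)).
  pose proof (is_lim_sum_n f J Hl) as Hs. apply is_lim_seq_spec in Hs.
  destruct (Hs (pos_div_2 eps)) as [N0 HN0].
  exists N0. intros N HN. specialize (HN0 N HN).
  rewrite Rminus_0_r in *. change (pos (pos_div_2 eps)) with (eps / 2) in *.
  rewrite (Series_incr_n (f N) (S J)) by (auto; lia). simpl pred.
  rewrite <- sum_n_Reals.
  assert (0 <= sum_n (f N) J) by (apply sum_n_nonneg; intros; apply Hf).
  assert (0 <= Series (fun k => f N (S J + k)%nat)).
  { apply Series_nonneg. intros; apply Hf. apply ex_series_tail; auto. }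
  assert (Series (fun k => f N (S J + k)%nat) <= Series (fun k => c (S J + k)%nat)).
  { apply Series_le. intros; apply Hf. apply ex_series_tail; auto. }
  assert (0 <= Series (fun k => c (S J + k)%nat)).
  { apply Series_nonneg. intros k. pose proof (Hf 0%nat (S J + k)%nat); lra. apply ex_series_tail; auto. }
  rewrite Rabs_pos_eq in HJ by lra. rewrite Rabs_pos_eq in HN0 by lra.
  rewrite Rabs_pos_eq by lra. lra.
Qed.

Lemma fubini (a d : nat -> nat -> R) (y c : nat -> R) :
  (forall n, is_series (fun j => a n j) (y n)) ->
  (forall n j, Rabs (a n j) <= d n j) ->
  (forall j, is_series (fun n => d n j) (c j)) ->
  ex_series c ->
  is_series y (Series (fun j => Series (fun n => a n j))).
Proof.
  intros Hy Had Hd Hc.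
  assert (Hd0 : forall n j, 0 <= d n j) by (intros n j; pose proof (Had n j); pose proof (Rabs_pos (a n j)); lra).
  assert (Hexd : forall j, ex_series (fun n => d n j)) by (intros j; exists (c j); auto).
  assert (Hexabs : forall j N, ex_series (fun k => Rabs (a (S N + k)%nat j))).
  { intros j N. apply (@ex_series_le R_AbsRing R_CompleteNormedModule _ (fun k => d (S N + k)%nat j)).
    intros k. change (Rabs (Rabs (a (S N + k)%nat j)) <= d (S N + k)%nat j). rewrite Rabs_Rabsolu; auto.
    apply (ex_series_tail (fun n => d n j)); auto. }
  assert (Hexa : forall j, ex_series (fun n => a n j)).
  { intros j. apply (@ex_series_le R_AbsRing R_CompleteNormedModule _ (fun n => d n j)); auto. }
  set (A := fun j => Series (fun n => a n j)).
  assert (Hcj : forall j, c j = Series (fun n => d n j)) by (intros j; symmetry; apply is_series_unique; auto).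
  assert (HA : forall j, Rabs (A j) <= c j).
  { intros j. unfold A. eapply Rle_trans. apply Series_Rabs.
    apply (@ex_series_le R_AbsRing R_CompleteNormedModule _ (fun n => d n j)); auto.
    intros n. change (Rabs (Rabs (a n j)) <= d n j). rewrite Rabs_Rabsolu; auto.
    rewrite Hcj. apply Series_le; auto. intros n; split; [apply Rabs_pos| auto]. }
  assert (HexA : ex_series A).
  { apply (@ex_series_le R_AbsRing R_CompleteNormedModule _ c); auto. }
  assert (Hfin : forall N, is_series (fun j => sum_n (fun n => a n j) N) (sum_n y N)).
  { induction N.
    - rewrite sumn_O. eapply isR_ext; [| apply Hy]. intros j; simpl. symmetry; apply (sumn_O (fun n => a n j)).
    - rewrite sumn_S. pose proof (isR_lin _ _ _ _ 1 1 IHN (Hy (S N))) as H.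
      rewrite !Rmult_1_l in H. eapply isR_ext; [| exact H]. intros j; simpl.
      rewrite !Rmult_1_l. symmetry; apply (sumn_S (fun n => a n j)). }
  set (tau := fun N j => Series (fun k => d (S N + k)%nat j)).
  assert (Htau : forall N j, 0 <= tau N j <= c j).
  { intros N j. unfold tau. rewrite (Series_tail (fun n => d n j)) by auto. rewrite <- Hcj. split.
    - pose proof (proj1 (iss_lim _ _) (Hd j)) as H.
      assert (Hm : forall M, (N <= M)%nat -> sum_n (fun n => d n j) N <= sum_n (fun n => d n j) M).
      { intros M HM. induction HM. lra. rewrite sumn_S. pose proof (Hd0 (S m) j); lra. }
      pose proof (is_lim_seq_le (fun _ => sum_n (fun n => d n j) N) (fun M => sum_n (fun n => d n j) (M + N)%nat) (sum_n (fun n => d n j) N) (c j)) as Hle.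
      simpl in Hle. cut (sum_n (fun n => d n j) N <= c j); [lra|]. apply Hle.
      intros M; apply Hm; lia. apply is_lim_seq_const.
      apply (is_lim_seq_incr_n (fun M => sum_n (fun n => d n j) M) N). exact H.
    - pose proof (sum_n_nonneg (fun n => d n j) N (fun n => Hd0 n j)). lra. }
  assert (Htau0 : is_lim_seq (fun N => Series (fun j => tau N j)) 0).
  { apply (dct_series tau c); auto. intros j. unfold tau. apply (tail_lim (fun n => d n j)); auto. }
  assert (Hdiff : forall N, Rabs (Series A - sum_n y N) <= Series (fun j => tau N j)).
  { intros N. rewrite <- (is_series_unique _ _ (Hfin N)).
    rewrite <- Series_minus by (auto; eexists; apply Hfin).
    assert (E : forall j, A j - sum_n (fun n => a n j) N = Series (fun k => a (S N + k)%nat j)).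
    { intros j. unfold A. rewrite (Series_tail (fun n => a n j)); auto. }
    rewrite (Series_ext _ _ E).
    assert (Hexs : ex_series (fun j => Rabs (Series (fun k => a (S N + k)%nat j)))).
    { apply (@ex_series_le R_AbsRing R_CompleteNormedModule _ c); auto.
      intros j. change (Rabs (Rabs (Series (fun k => a (S N + k)%nat j))) <= c j). rewrite Rabs_Rabsolu.
      eapply Rle_trans; [apply Series_Rabs; auto|]. eapply Rle_trans; [| apply (Htau N j)].
      unfold tau. apply Series_le. intros k; split; [apply Rabs_pos| auto]. apply (ex_series_tail (fun n => d n j)); auto. }
    eapply Rle_trans; [apply Series_Rabs; auto|].
    apply Series_le.
    - intros j; split; [apply Rabs_pos|]. eapply Rle_trans; [apply Series_Rabs; auto|].
      unfold tau. apply Series_le. intros k; split; [apply Rabs_pos| auto]. apply (ex_series_tail (fun n => d n j)); auto.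
    - apply (@ex_series_le R_AbsRing R_CompleteNormedModule _ c); auto.
      intros j. change (Rabs (tau N j) <= c j). rewrite Rabs_pos_eq; apply Htau. }
  apply iss_lim.
  assert (Hz : is_lim_seq (fun N => Series A - sum_n y N) 0).
  { apply (is_lim_seq_le_le (fun N => - Series (fun j => tau N j)) _ (fun N => Series (fun j => tau N j))).
    intros N. pose proof (Hdiff N). apply Rabs_le_between in H; lra.
    - replace (Finite 0) with (Rbar_opp 0) by (simpl; f_equal; ring). apply -> is_lim_seq_opp. auto.
    - auto. }
  pose proof (is_lim_seq_minus' (fun _ => Series A) _ (Series A) 0 (is_lim_seq_const _) Hz) as HH.
  rewrite Rminus_0_r in HH.
  eapply is_lim_seq_ext; [| exact HH]. intros N; simpl; ring.
Qed.


Definition zsum (u : Z -> R) (Sm : R) : Prop :=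
  is_series (fun n => u (Z.of_nat n) + u (- Z.of_nat (S n))%Z) Sm.

Definition znull (u : Z -> R) : Prop :=
  is_lim_seq (fun n => u (Z.of_nat n)) 0 /\ is_lim_seq (fun n => u (- Z.of_nat n)%Z) 0.

Lemma zsum_lin u v a b c d : zsum u a -> zsum v b ->
  zsum (fun m => c * u m + d * v m) (c * a + d * b).
Proof. unfold zsum. intros Hu Hv. pose proof (isR_lin _ _ _ _ c d Hu Hv) as H.
  eapply isR_ext; [| exact H]. intros n; simpl; ring. Qed.

Lemma zsum_ext u v a : (forall m, u m = v m) -> zsum u a -> zsum v a.
Proof. unfold zsum. intros E H. eapply isR_ext; [| exact H]. intros n; simpl; rewrite !E; ring. Qed.

Lemma zsum_unique u a b : zsum u a -> zsum u b -> a = b.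
Proof. unfold zsum. intros H1 H2. rewrite <- (is_series_unique _ _ H1). apply is_series_unique; auto. Qed.

Lemma znull_lin u v c d : znull u -> znull v -> znull (fun m => c * u m + d * v m).
Proof. intros [H1 H2] [H3 H4]. split.
  - replace (Finite 0) with (Finite (c * 0 + d * 0)) by (f_equal; ring).
    apply is_lim_seq_plus'; apply is_lim_seq_mult'; auto; apply is_lim_seq_const.
  - replace (Finite 0) with (Finite (c * 0 + d * 0)) by (f_equal; ring).
    apply is_lim_seq_plus'; apply is_lim_seq_mult'; auto; apply is_lim_seq_const.
Qed.

Lemma znull_ext u v : (forall m, u m = v m) -> znull u -> znull v.
Proof. intros E [H1 H2]. split.
  - eapply is_lim_seq_ext; [| exact H1]. intros n; simpl; auto.
  - eapply is_lim_seq_ext; [| exact H2]. intros n; simpl; auto. Qed.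

Lemma tele (u : Z -> R) N :
  sum_n (fun n => u (Z.of_nat n - 1)%Z + u (- Z.of_nat (S n) - 1)%Z) N =
  sum_n (fun n => u (Z.of_nat n) + u (- Z.of_nat (S n))%Z) N - u (Z.of_nat N) + u (- Z.of_nat (S (S N)))%Z.
Proof.
  induction N.
  - rewrite !sumn_O. replace (Z.of_nat 0 - 1)%Z with (- Z.of_nat 1)%Z by lia.
    replace (- Z.of_nat 1 - 1)%Z with (- Z.of_nat 2)%Z by lia. simpl. ring.
  - rewrite !sumn_S, IHN.
    replace (Z.of_nat (S N) - 1)%Z with (Z.of_nat N) by lia.
    replace (- Z.of_nat (S (S N)) - 1)%Z with (- Z.of_nat (S (S (S N))))%Z by lia. match goal with |- ?a = ?b => change (@eq R a b) end. ring.
Qed.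

Lemma zsum_back u Sm : znull u -> zsum u Sm -> zsum (fun m => u (m - 1)%Z) Sm.
Proof.
  intros [H1 H2] H. unfold zsum in *. apply iss_lim. apply iss_lim in H.
  eapply is_lim_seq_ext. intros N; symmetry; apply tele.
  replace (Finite Sm) with (Finite (Sm - 0 + 0)) by (f_equal; ring).
  apply is_lim_seq_plus'. apply is_lim_seq_minus'; auto.
  apply (is_lim_seq_incr_n (fun n => u (- Z.of_nat n)%Z) 2) in H2.
  eapply is_lim_seq_ext; [| exact H2]. intros n; cbv beta. f_equal. lia.
Qed.

Lemma znull_back u : znull u -> znull (fun m => u (m - 1)%Z).
Proof.
  intros [H1 H2]. split.
  - apply is_lim_seq_incr_1. eapply is_lim_seq_ext; [| exact H1]. intros n; cbv beta. f_equal; lia.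
  - apply is_lim_seq_incr_1 in H2. eapply is_lim_seq_ext; [| exact H2]. intros n; cbv beta. f_equal; lia.
Qed.

Lemma zsum_backn u Sm : znull u -> zsum u Sm -> forall p, zsum (fun m => u (m - Z.of_nat p)%Z) Sm /\ znull (fun m => u (m - Z.of_nat p)%Z).
Proof.
  intros H0 H p. induction p.
  - split; [eapply zsum_ext | eapply znull_ext]; try eassumption; intros m; cbv beta; f_equal; lia.
  - destruct IHp as [Hs Hn]. split.
    + eapply zsum_ext; [| apply (zsum_back _ _ Hn Hs)]. intros m; cbv beta. f_equal; lia.
    + eapply znull_ext; [| apply (znull_back _ Hn)]. intros m; cbv beta. f_equal; lia.
Qed.


Lemma nat_ineq j p : (j + 2*(p*j) <= j*j + (p + p*p))%nat.
Proof. destruct (Nat.le_gt_cases j p).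
 - assert (exists d, p = (j + d)%nat) as [d ->] by (exists (p - j)%nat; lia). nia.
 - assert (exists d, j = (p + S d)%nat) as [d ->] by (exists (j - p - 1)%nat; lia). nia. Qed.

Fixpoint prodR (q t : R) (n : nat) : R :=
  match n with O => 1 | S n => prodR q t n * (1 + t ^ 2 * (q ^ 2) ^ n) end.

Fixpoint Qn (q : R) (n : nat) (t : R) : R :=
  match n with O => 1 | S n => Qn q n t * (1 + (q ^ 2) ^ n * t ^ 2) end.

Section Core.
Variables q gamma : R.
Variable P : R -> R.
Hypothesis Hq : 0 < q < 1.
Hypothesis Hg : 0 < gamma.
Hypothesis HP : forall t, is_lim_seq (prodR q t) (P t).

Lemma prodR_ge1 t n : 1 <= prodR q t n.
Proof. induction n; cbn [prodR]. lra. assert (0 <= t ^ 2 * (q ^ 2) ^ n).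
  { apply Rmult_le_pos. apply pow2_ge_0. apply pow_le. simpl; nra. }
  nra. Qed.

Lemma prodR_mono t n k : prodR q t n <= prodR q t (k + n).
Proof. induction k. simpl; lra. change (S k + n)%nat with (S (k + n)). cbn [prodR].
  pose proof (prodR_ge1 t (k + n)).
  assert (0 <= t ^ 2 * (q ^ 2) ^ (k + n)).
  { apply Rmult_le_pos. apply pow2_ge_0. apply pow_le. simpl; nra. }
  nra. Qed.

Lemma P_ge t n : prodR q t n <= P t.
Proof.
  pose proof (is_lim_seq_le (fun _ => prodR q t n) (fun k => prodR q t (k + n)) (prodR q t n) (P t)) as H.
  simpl in H. apply H. intros k; apply prodR_mono. apply is_lim_seq_const.
  apply (is_lim_seq_incr_n (prodR q t) n). apply HP.
Qed.

Lemma P_ge1 t : 1 <= P t.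
Proof. pose proof (P_ge t 0). simpl in H. lra. Qed.

Lemma prodR_shift t n : prodR q t (S n) = (1 + t ^ 2) * prodR q (q * t) n.
Proof. induction n. simpl; ring.
  change (prodR q t (S (S n))) with (prodR q t (S n) * (1 + t ^ 2 * (q ^ 2) ^ (S n))).
  rewrite IHn. simpl. ring. Qed.

Lemma P_shift t : P t = (1 + t ^ 2) * P (q * t).
Proof.
  assert (H1 : is_lim_seq (fun n => prodR q t (S n)) (P t)) by (apply -> is_lim_seq_incr_1; apply HP).
  assert (H2 : is_lim_seq (fun n => prodR q t (S n)) ((1 + t ^ 2) * P (q * t))).
  { eapply is_lim_seq_ext. intros n; symmetry; apply prodR_shift.
    apply (is_lim_seq_scal_l _ (1 + t ^ 2) (P (q * t))). apply HP. }
  apply is_lim_seq_unique in H1. apply is_lim_seq_unique in H2. rewrite H1 in H2.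
  injection H2; auto.
Qed.

Lemma prodR_lower t n : 0 <= t -> t ^ (2 * n) * q ^ (n * (n - 1)) <= prodR q t n.
Proof.
  intros Ht. induction n. simpl; lra.
  change (prodR q t (S n)) with (prodR q t n * (1 + t ^ 2 * (q ^ 2) ^ n)).
  replace (2 * S n)%nat with (2 * n + 2)%nat by lia.
  replace (S n * (S n - 1))%nat with (n * (n - 1) + 2 * n)%nat by (destruct n; simpl; nia).
  rewrite !pow_add, <- pow_mult.
  assert (0 <= t ^ (2 * n) * q ^ (n * (n - 1))) by (apply Rmult_le_pos; apply pow_le; lra).
  assert (0 <= t ^ 2 * q ^ (2 * n)) by (apply Rmult_le_pos; apply pow_le; lra).
  replace (t ^ (2 * n) * t ^ 2 * (q ^ (n * (n - 1)) * q ^ (2 * n)))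
    with ((t ^ (2 * n) * q ^ (n * (n - 1))) * (t ^ 2 * q ^ (2 * n))) by ring.
  apply Rmult_le_compat; auto. lra.
Qed.

Definition tt (m : Z) : R := jpt q gamma m.

Lemma tt_pos m : 0 < tt m.
Proof. unfold tt, jpt. apply Rmult_lt_0_compat; auto. apply powerRZ_lt. lra. Qed.

Lemma tt_addn m p : tt (m + Z.of_nat p)%Z = q ^ p * tt m.
Proof. unfold tt, jpt. rewrite powerRZ_add by lra. rewrite <- pow_powerRZ. ring. Qed.

Lemma tt_subn m p : tt (m - Z.of_nat p)%Z = tt m / q ^ p.
Proof. assert (0 < q ^ p) by (apply pow_lt; lra).
  replace m with ((m - Z.of_nat p) + Z.of_nat p)%Z at 2 by lia. rewrite tt_addn. field. lra. Qed.

Lemma tt_nat n : tt (Z.of_nat n) = q ^ n * gamma.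
Proof. unfold tt, jpt. rewrite <- pow_powerRZ. ring. Qed.

Lemma tt_neg n : tt (- Z.of_nat n)%Z = gamma / q ^ n.
Proof. unfold tt, jpt. rewrite powerRZ_neg', <- pow_powerRZ. unfold Rdiv. ring. Qed.

Definition W (m : Z) : R := tt m / P (tt m).

Lemma W_pos m : 0 < W m.
Proof. unfold W. pose proof (P_ge1 (tt m)). apply Rdiv_lt_0_compat. apply tt_pos. lra. Qed.

Lemma W_le m : W m <= tt m.
Proof. unfold W. pose proof (P_ge1 (tt m)). pose proof (tt_pos m).
  apply (Rmult_le_reg_r (P (tt m))). lra. unfold Rdiv. rewrite Rmult_assoc, Rinv_l by lra. nra. Qed.

Lemma W_succ m : W (m + 1)%Z = q * (1 + tt m ^ 2) * W m.
Proof.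
  unfold W. replace (m + 1)%Z with (m + Z.of_nat 1)%Z by lia. rewrite tt_addn.
  rewrite (P_shift (tt m)). simpl pow at 1 2. rewrite Rmult_1_r.
  pose proof (P_ge1 (q * tt m)). assert (0 < 1 + tt m ^ 2) by (pose proof (pow2_ge_0 (tt m)); lra).
  field. lra.
Qed.

Lemma W_addn m p : W (m + Z.of_nat p)%Z = q ^ p * Qn q p (tt m) * W m.
Proof.
  induction p.
  - replace (m + Z.of_nat 0)%Z with m by lia. simpl; ring.
  - replace (m + Z.of_nat (S p))%Z with ((m + Z.of_nat p) + 1)%Z by lia.
    rewrite W_succ, IHp, tt_addn. cbn [Qn].
    rewrite <- pow_mult, Rpow_mult_distr, <- pow_mult.
    replace (p * 2)%nat with (2 * p)%nat by lia. simpl pow. ring.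
Qed.

Definition rt (j : nat) (m : Z) : R := W m * tt m ^ (2 * j).

Lemma rt_pos j m : 0 < rt j m.
Proof. unfold rt. apply Rmult_lt_0_compat. apply W_pos. apply pow_lt, tt_pos. Qed.

Lemma rt_nat_bound j n : rt j (Z.of_nat n) <= gamma ^ (2 * j + 1) * q ^ n.
Proof.
  unfold rt. pose proof (W_le (Z.of_nat n)). pose proof (pow_le (tt (Z.of_nat n)) (2 * j) (Rlt_le _ _ (tt_pos _))).
  eapply Rle_trans. apply Rmult_le_compat_r; eauto.
  replace (tt (Z.of_nat n) * tt (Z.of_nat n) ^ (2 * j)) with (tt (Z.of_nat n) ^ (2 * j + 1))
    by (rewrite pow_add; ring).
  rewrite tt_nat, Rpow_mult_distr, <- pow_mult.
  assert (q ^ (n * (2 * j + 1)) <= q ^ n) by (apply pow_le_r; [lra| nia]).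
  pose proof (pow_le gamma (2 * j + 1) (Rlt_le _ _ Hg)).
  rewrite (Rmult_comm (gamma ^ _)). apply Rmult_le_compat_r; auto.
Qed.

Lemma rt_neg_bound j n : rt j (- Z.of_nat (S n))%Z <= q ^ (S n) / (gamma * q ^ (j * (j + 1))).
Proof.
  unfold rt, W. set (t := tt (- Z.of_nat (S n))%Z).
  assert (Ht : 0 < t) by apply tt_pos.
  assert (Et : t = gamma / q ^ S n) by apply tt_neg.
  pose proof (prodR_lower t (S j) (Rlt_le _ _ Ht)) as Hl.
  pose proof (P_ge t (S j)) as Hp.
  replace (S j * (S j - 1))%nat with (j * (j + 1))%nat in Hl by (simpl; nia).
  set (L := t ^ (2 * S j) * q ^ (j * (j + 1))) in *.
  assert (HqS : 0 < q ^ S n) by (apply pow_lt; lra).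
  assert (Hqj : 0 < q ^ (j * (j + 1))) by (apply pow_lt; lra).
  assert (HL : 0 < L) by (unfold L; apply Rmult_lt_0_compat; [apply pow_lt|]; lra).
  assert (E1 : t / P t * t ^ (2 * j) = t ^ (2 * j + 1) / P t) by (rewrite pow_add; field; pose proof (P_ge1 t); lra).
  rewrite E1.
  assert (t ^ (2 * j + 1) / P t <= t ^ (2 * j + 1) / L).
  { unfold Rdiv. apply Rmult_le_compat_l. apply pow_le; lra. apply Rinv_le_contravar; lra. }
  eapply Rle_trans; [exact H|].
  right. unfold L. replace (2 * S j)%nat with (2 * j + 1 + 1)%nat by lia. rewrite !pow_add.
  rewrite Et. field. split; try lra. split; try lra.
  assert (0 < (gamma / q ^ S n) ^ (2 * j)) by (apply pow_lt; apply Rdiv_lt_0_compat; lra). lra.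
Qed.

Lemma rt_ex_pos j : ex_series (fun n => rt j (Z.of_nat n)).
Proof.
  apply (@ex_series_le R_AbsRing R_CompleteNormedModule _ (fun n => gamma ^ (2 * j + 1) * q ^ n)).
  intros n. change (Rabs (rt j (Z.of_nat n)) <= gamma ^ (2 * j + 1) * q ^ n).
  rewrite Rabs_pos_eq by (left; apply rt_pos). apply rt_nat_bound.
  exists (gamma ^ (2 * j + 1) * / (1 - q)). apply isR_scal. apply is_series_geom. rewrite Rabs_pos_eq; lra.
Qed.

Lemma rt_ex_neg j : ex_series (fun n => rt j (- Z.of_nat (S n))%Z).
Proof.
  apply (@ex_series_le R_AbsRing R_CompleteNormedModule _ (fun n => q / (gamma * q ^ (j * (j + 1))) * q ^ n)).
  intros n. change (Rabs (rt j (- Z.of_nat (S n))%Z) <= q / (gamma * q ^ (j * (j + 1))) * q ^ n).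
  rewrite Rabs_pos_eq by (left; apply rt_pos). eapply Rle_trans; [apply rt_neg_bound|].
  right. simpl pow at 1. unfold Rdiv. ring.
  exists (q / (gamma * q ^ (j * (j + 1))) * / (1 - q)). apply isR_scal. apply is_series_geom. rewrite Rabs_pos_eq; lra.
Qed.

Definition rho (j : nat) : R := Series (fun n => rt j (Z.of_nat n) + rt j (- Z.of_nat (S n))%Z).

Lemma rho_zsum j : zsum (rt j) (rho j).
Proof. unfold zsum, rho. apply Series_correct.
  destruct (rt_ex_pos j) as [a Ha]. destruct (rt_ex_neg j) as [b Hb].
  exists (a + b). pose proof (isR_lin _ _ _ _ 1 1 Ha Hb) as H. rewrite !Rmult_1_l in H.
  eapply isR_ext; [| exact H]. intros n; simpl; ring. Qed.

Lemma ex_lim0_neg (u : Z -> R) : ex_series (fun n => u (- Z.of_nat (S n))%Z) ->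
  is_lim_seq (fun n => u (- Z.of_nat n)%Z) 0.
Proof. intros H. apply is_lim_seq_incr_1. apply ex_series_lim_0 in H. exact H. Qed.

Lemma rt_null j : znull (rt j).
Proof. split. apply ex_series_lim_0, rt_ex_pos. apply ex_lim0_neg, rt_ex_neg. Qed.

Lemma rho_pos j : 0 < rho j.
Proof.
  unfold rho. set (a := fun n => rt j (Z.of_nat n) + rt j (- Z.of_nat (S n))%Z).
  assert (Hex : ex_series a) by (eexists; apply rho_zsum).
  rewrite Series_incr_1 by auto.
  assert (0 < a 0%nat) by (unfold a; pose proof (rt_pos j (Z.of_nat 0)); pose proof (rt_pos j (- Z.of_nat 1)%Z); lra).
  assert (0 <= Series (fun k => a (S k))).
  { apply Series_nonneg. intros k; unfold a. pose proof (rt_pos j (Z.of_nat (S k))); pose proof (rt_pos j (- Z.of_nat (S (S k)))%Z); lra.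
    apply (ex_series_tail a 0); auto. }
  lra.
Qed.

Lemma rho_rec j : q * (rho j + rho (S j)) = (/ q) ^ (2 * j) * rho j.
Proof.
  set (v := fun m => q * rt j m + q * rt (S j) m).
  assert (Hv : zsum v (q * rho j + q * rho (S j))) by (apply zsum_lin; apply rho_zsum).
  assert (Hn : znull v) by (apply znull_lin; apply rt_null).
  pose proof (zsum_back v _ Hn Hv) as Hb.
  assert (Hb2 : zsum (fun m => (/ q) ^ (2 * j) * rt j m + 0 * rt j m) ((/ q) ^ (2 * j) * rho j + 0 * rho j))
    by (apply zsum_lin; apply rho_zsum).
  assert (E : forall m, v (m - 1)%Z = (/ q) ^ (2 * j) * rt j m + 0 * rt j m).
  { intros m. unfold v, rt.
    pose proof (W_succ (m - 1)) as Ws. replace (m - 1 + 1)%Z with m in Ws by lia.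
    replace (m - 1)%Z with (m - Z.of_nat 1)%Z by lia. rewrite Ws. 
    replace (m - Z.of_nat 1)%Z with (m - 1)%Z by lia.
    assert (Et2 : tt m = q * tt (m - 1)%Z).
    { replace m with ((m - 1) + Z.of_nat 1)%Z at 1 by lia. rewrite tt_addn. simpl; ring. }
    rewrite Et2. replace (2 * S j)%nat with (2 * j + 2)%nat by lia. rewrite pow_add, Rpow_mult_distr, pow_inv.
    assert (0 < q ^ (2 * j)) by (apply pow_lt; lra). field. lra. }
  pose proof (zsum_ext _ _ _ E Hb) as H3.
  pose proof (zsum_unique _ _ _ H3 Hb2). lra.
Qed.

Lemma rho_bound j : rho j * q ^ (j * j) <= rho 0.
Proof.
  induction j. simpl; lra.
  pose proof (rho_rec j) as R. pose proof (rho_pos j). pose proof (rho_pos (S j)).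
  assert (E : rho (S j) = ((/ q) ^ (2 * j) / q - 1) * rho j) by (field_simplify_eq; [lra| lra]).
  assert (Hle : rho (S j) <= (/ q) ^ (2 * j + 1) * rho j).
  { rewrite E, pow_add, pow_1. unfold Rdiv. nra. }
  replace (S j * S j)%nat with (j * j + (2 * j + 1))%nat by lia. rewrite pow_add.
  assert (0 < q ^ (2 * j + 1)) by (apply pow_lt; lra).
  assert (0 <= q ^ (j * j)) by (apply pow_le; lra).
  eapply Rle_trans; [| exact IHj].
  replace (rho j * q ^ (j * j)) with ((/ q) ^ (2 * j + 1) * rho j * (q ^ (j * j) * q ^ (2 * j + 1))).
  apply Rmult_le_compat_r; [nra| exact Hle].
  rewrite pow_inv. field. lra.
Qed.

Lemma tt_subn_pow m p j : tt (m - Z.of_nat p)%Z ^ (2 * j) = ((/ q) ^ 2) ^ (p * j) * tt m ^ (2 * j).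
Proof.
  rewrite tt_subn. unfold Rdiv. rewrite Rpow_mult_distr, <- pow_inv, <- !pow_mult.
  replace (p * (2 * j))%nat with (2 * (p * j))%nat by lia. ring.
Qed.

Theorem core_main (b : nat -> R) (g : R -> R) (B : R) :
  (forall j, Rabs (b j) <= B * q ^ (2 * j * j)) ->
  (forall t, is_series (fun j => b j * t ^ (2 * j)) (g t)) ->
  (forall k, zsum (fun m => W m * g (tt m) * tt m ^ (2 * k)) 0) ->
  (forall k, znull (fun m => W m * g (tt m) * tt m ^ (2 * k))) ->
  forall j, b j = 0.
Proof.
  intros Hb Hg' Hz Hnl.
  assert (HB : 0 <= B) by (specialize (Hb 0%nat); simpl in Hb; pose proof (Rabs_pos (b 0%nat)); lra).
  set (term := fun n k m => W m * g (tt m) * tt m ^ (2 * k) * Qn q n (tt m)).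
  assert (S1 : forall n k, zsum (term n k) 0 /\ znull (term n k)).
  { induction n; intros k.
    - assert (E0 : forall m, W m * g (tt m) * tt m ^ (2 * k) = term 0%nat k m) by (intros m; unfold term; simpl; ring).
      split; [apply (zsum_ext _ _ _ E0 (Hz k)) | apply (znull_ext _ _ E0 (Hnl k))].
    - destruct (IHn k) as [A1 A2]. destruct (IHn (S k)) as [B1 B2].
      assert (E : forall m, 1 * term n k m + (q ^ 2) ^ n * term n (S k) m = term (S n) k m).
      { intros m. unfold term. cbn [Qn]. replace (2 * S k)%nat with (2 * k + 2)%nat by lia. rewrite pow_add. ring. }
      split.
      + eapply zsum_ext; [exact E|]. pose proof (zsum_lin _ _ _ _ 1 ((q ^ 2) ^ n) A1 B1) as H.
        replace (1 * 0 + (q ^ 2) ^ n * 0) with 0 in H by ring. exact H.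
      + eapply znull_ext; [exact E|]. apply znull_lin; auto. }
  set (X := (/ q) ^ 2).
  assert (Hzp : forall p, is_series (fun j => b j * rho j * X ^ (p * j)) 0).
  { intros p.
    set (u := fun m => W (m + Z.of_nat p)%Z * g (tt m)).
    assert (Eu : forall m, q ^ p * term p 0%nat m + 0 * term p 0%nat m = u m).
    { intros m. unfold u, term. rewrite W_addn. simpl pow. ring. }
    destruct (S1 p 0%nat) as [T1 T2].
    assert (U1 : zsum u 0).
    { eapply zsum_ext; [exact Eu|]. pose proof (zsum_lin _ _ _ _ (q ^ p) 0 T1 T1) as H.
      replace (q ^ p * 0 + 0 * 0) with 0 in H by ring. exact H. }
    assert (U2 : znull u) by (eapply znull_ext; [exact Eu| apply znull_lin; auto]).
    destruct (zsum_backn u 0 U2 U1 p) as [V1 _].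
    assert (V2 : zsum (fun m => W m * g (tt (m - Z.of_nat p)%Z)) 0).
    { eapply zsum_ext; [| exact V1]. intros m. unfold u. cbv beta. f_equal. f_equal. lia. }
    unfold zsum in V2.
    set (y := fun n : nat => W (Z.of_nat n) * g (tt (Z.of_nat n - Z.of_nat p)%Z) +
                            W (- Z.of_nat (S n))%Z * g (tt (- Z.of_nat (S n) - Z.of_nat p)%Z)) in V2.
    set (a := fun (n j : nat) => b j * X ^ (p * j) * (rt j (Z.of_nat n) + rt j (- Z.of_nat (S n))%Z)).
    set (d := fun (n j : nat) => Rabs (b j) * X ^ (p * j) * (rt j (Z.of_nat n) + rt j (- Z.of_nat (S n))%Z)).
    set (c := fun j => Rabs (b j) * X ^ (p * j) * rho j).
    assert (HX : 0 < X) by (unfold X; apply pow_lt; apply Rinv_0_lt_compat; lra).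
    assert (Hrow : forall n, is_series (fun j => a n j) (y n)).
    { intros n. pose proof (isR_lin _ _ _ _ (W (Z.of_nat n)) (W (- Z.of_nat (S n))%Z)
         (Hg' (tt (Z.of_nat n - Z.of_nat p)%Z)) (Hg' (tt (- Z.of_nat (S n) - Z.of_nat p)%Z))) as H.
      eapply isR_ext; [| exact H]. intros j. unfold a, rt. cbv beta. rewrite !tt_subn_pow. unfold X. ring. }
    assert (Had : forall n j, Rabs (a n j) <= d n j).
    { intros n j. unfold a, d. right. rewrite !Rabs_mult. rewrite (Rabs_pos_eq (X ^ _)) by (apply pow_le; lra).
      rewrite (Rabs_pos_eq (_ + _)); auto. pose proof (rt_pos j (Z.of_nat n)); pose proof (rt_pos j (- Z.of_nat (S n))%Z); lra. }
    assert (Hcol : forall j, is_series (fun n => d n j) (c j)).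
    { intros j. unfold d, c. apply isR_scal. apply rho_zsum. }
    assert (Hcb : forall j, c j <= B * rho 0%nat * / q ^ (p + p * p) * q ^ j).
    { intros j. unfold c. pose proof (rho_bound j). pose proof (rho_pos j). pose proof (Hb j).
      assert (HXp : X ^ (p * j) = / q ^ (2 * (p * j))) by (unfold X; rewrite <- pow_mult, pow_inv; f_equal).
      assert (Hqq : q ^ (j * j) * q ^ (p + p * p) <= q ^ j * q ^ (2 * (p * j))).
      { rewrite <- !pow_add. apply pow_le_r. split; apply Rlt_le; apply Hq. apply nat_ineq. }
      assert (0 < q ^ (2 * (p * j))) by (apply pow_lt; lra).
      assert (0 < q ^ (p + p * p)) by (apply pow_lt; lra).
      assert (0 <= q ^ (j * j)) by (apply pow_le; lra).
      assert (E2 : q ^ (2 * j * j) = q ^ (j * j) * q ^ (j * j)) by (rewrite <- pow_add; f_equal; lia).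
      rewrite HXp.
      assert (Rabs (b j) * rho j <= B * rho 0%nat * q ^ (j * j)).
      { eapply Rle_trans. apply Rmult_le_compat_r. lra. exact H1. rewrite E2.
        replace (B * (q ^ (j * j) * q ^ (j * j)) * rho j) with (B * q ^ (j * j) * (rho j * q ^ (j * j))) by ring.
        replace (B * rho 0%nat * q ^ (j * j)) with (B * q ^ (j * j) * rho 0%nat) by ring.
        apply Rmult_le_compat_l; [nra| exact H]. }
      apply (Rmult_le_reg_r (q ^ (2 * (p * j)) * q ^ (p + p * p))). nra.
      replace (Rabs (b j) * / q ^ (2 * (p * j)) * rho j * (q ^ (2 * (p * j)) * q ^ (p + p * p)))
        with (Rabs (b j) * rho j * q ^ (p + p * p)) by (field; lra).
      replace (B * rho 0%nat * / q ^ (p + p * p) * q ^ j * (q ^ (2 * (p * j)) * q ^ (p + p * p)))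
        with (B * rho 0%nat * (q ^ j * q ^ (2 * (p * j)))) by (field; lra).
      pose proof (rho_pos 0). eapply Rle_trans. apply Rmult_le_compat_r. lra. exact H5.
      replace (B * rho 0%nat * q ^ (j * j) * q ^ (p + p * p)) with (B * rho 0%nat * (q ^ (j * j) * q ^ (p + p * p))) by ring.
      apply Rmult_le_compat_l; [nra| exact Hqq]. }
    assert (Hc0 : forall j, 0 <= c j).
    { intros j. unfold c. pose proof (rho_pos j). apply Rmult_le_pos; [apply Rmult_le_pos; [apply Rabs_pos| apply pow_le; lra]| lra]. }
    assert (Hexc : ex_series c).
    { apply (@ex_series_le R_AbsRing R_CompleteNormedModule _ (fun j => B * rho 0%nat * / q ^ (p + p * p) * q ^ j)).
      intros j. change (Rabs (c j) <= B * rho 0%nat * / q ^ (p + p * p) * q ^ j). rewrite Rabs_pos_eq; auto.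
      exists (B * rho 0%nat * / q ^ (p + p * p) * / (1 - q)). apply isR_scal. apply is_series_geom. rewrite Rabs_pos_eq; lra. }
    pose proof (fubini a d y c Hrow Had Hcol Hexc) as HF.
    pose proof (is_series_unique _ _ HF) as HF1. rewrite (is_series_unique _ _ V2) in HF1.
    assert (Ecol : forall j, Series (fun n => a n j) = b j * rho j * X ^ (p * j)).
    { intros j. unfold a. rewrite Series_scal_l. rewrite (is_series_unique _ _ (rho_zsum j)). ring. }
    rewrite (Series_ext _ _ Ecol) in HF1.
    assert (Hex : ex_series (fun j => b j * rho j * X ^ (p * j))).
    { apply (@ex_series_le R_AbsRing R_CompleteNormedModule _ c); auto.
      intros j. change (Rabs (b j * rho j * X ^ (p * j)) <= c j). unfold c. right.
      rewrite !Rabs_mult. rewrite (Rabs_pos_eq (rho j)) by (left; apply rho_pos).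
      rewrite (Rabs_pos_eq (X ^ _)) by (apply pow_le; lra). ring. }
    rewrite HF1. apply Series_correct; auto. }
  intros j.
  assert (Hbeta : forall j, Rabs (b j * rho j) <= B * rho 0%nat * q ^ (j * j)).
  { intros i. rewrite Rabs_mult, (Rabs_pos_eq (rho i)) by (left; apply rho_pos).
    pose proof (rho_bound i). pose proof (rho_pos i). pose proof (Hb i).
    assert (E2 : q ^ (2 * i * i) = q ^ (i * i) * q ^ (i * i)) by (rewrite <- pow_add; f_equal; lia).
    assert (0 <= q ^ (i * i)) by (apply pow_le; lra).
    eapply Rle_trans. apply Rmult_le_compat_r. lra. exact H1. rewrite E2.
    replace (B * (q ^ (i * i) * q ^ (i * i)) * rho i) with (B * q ^ (i * i) * (rho i * q ^ (i * i))) by ring.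
    replace (B * rho 0%nat * q ^ (i * i)) with (B * q ^ (i * i) * rho 0%nat) by ring.
    apply Rmult_le_compat_l; [nra| exact H]. }
  pose proof (Zall q Hq (B * rho 0%nat) (fun j => b j * rho j) Hbeta Hzp j) as HZ.
  simpl in HZ. pose proof (rho_pos j).
  apply Rmult_integral in HZ. destruct HZ; auto. lra.
Qed.
End Core.


Lemma C_lim_Re (u : nat -> C) l : filterlim u eventually (locally l) ->
  is_lim_seq (fun n => Re (u n)) (Re l).
Proof.
  intros H. apply is_lim_seq_spec. intros eps.
  apply (H (fun z => Rabs (Re z - Re l) < eps)).
  exists eps. intros z [H1 H2]. exact H1.
Qed.

Lemma C_lim_Im (u : nat -> C) l : filterlim u eventually (locally l) ->
  is_lim_seq (fun n => Im (u n)) (Im l).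
Proof.
  intros H. apply is_lim_seq_spec. intros eps.
  apply (H (fun z => Rabs (Im z - Im l) < eps)).
  exists eps. intros z [H1 H2]. exact H2.
Qed.

Lemma sum_n_Re (u : nat -> C) N : Re (sum_n u N) = sum_n (fun n => Re (u n)) N.
Proof. induction N. rewrite !sum_O. reflexivity.
  rewrite !sum_Sn. rewrite <- IHN. reflexivity. Qed.

Lemma is_series_Re (u : nat -> C) l : is_series u l -> is_series (fun n => Re (u n)) (Re l).
Proof.
  intros H. apply iss_lim. pose proof (C_lim_Re _ _ H) as H1.
  eapply is_lim_seq_ext; [| exact H1]. intros N. apply sum_n_Re.
Qed.

Lemma C_lim_unique (u : nat -> C) l1 l2 :
  filterlim u eventually (locally l1) -> filterlim u eventually (locally l2) -> l1 = l2.
Proof. intros H1 H2. exact (filterlim_locally_unique u l1 l2 H1 H2). Qed.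


Lemma cpow_RtoC t n : cpow (RtoC t) n = RtoC (t ^ n).
Proof. induction n. reflexivity. simpl cpow. rewrite IHn. change (t ^ S n) with (t * t ^ n). rewrite RtoC_mult. reflexivity. Qed.

Lemma qpoch_real q t n : qpoch_partial (Copp (cpow (RtoC t) 2)) (q ^ 2) n = RtoC (prodR q t n).
Proof.
  induction n. reflexivity.
  change (qpoch_partial (Copp (cpow (RtoC t) 2)) (q ^ 2) (S n)) with
    (Cmult (qpoch_partial (Copp (cpow (RtoC t) 2)) (q ^ 2) n) (Cminus (RtoC 1) (Cmult (Copp (cpow (RtoC t) 2)) (RtoC ((q ^ 2) ^ n))))).
  rewrite IHn. cbn [prodR]. rewrite cpow_RtoC.
  apply injective_projections; simpl; ring.
Qed.

Lemma even_reindex (u : nat -> R) Sm :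
  is_series u Sm -> (forall j, u (2 * j + 1)%nat = 0) -> is_series (fun j => u (2 * j)%nat) Sm.
Proof.
  intros Hs0 Hodd. apply iss_lim. pose proof (proj1 (iss_lim _ _) Hs0) as H.
  assert (E : forall N, sum_n (fun j => u (2 * j)%nat) N = sum_n u (2 * N + 1)).
  { induction N.
    - rewrite sumn_O. replace (2 * 0 + 1)%nat with 1%nat by lia. rewrite sumn_S, sumn_O.
      pose proof (Hodd 0%nat) as H0. simpl in H0. rewrite H0. simpl. ring.
    - rewrite sumn_S, IHN. replace (2 * S N + 1)%nat with (S (S (2 * N + 1)))%nat by lia.
      rewrite !sumn_S. replace (S (S (2 * N + 1)))%nat with (2 * S N + 1)%nat by lia.
      rewrite Hodd. replace (S (2 * N + 1))%nat with (2 * S N)%nat by lia. match goal with |- ?a = ?b => change (@eq R a b) end. ring. }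
  apply is_lim_seq_spec. apply is_lim_seq_spec in H. intros eps.
  destruct (H eps) as [N0 HN0]. exists N0. intros N HN. rewrite E. apply HN0. lia.
Qed.

Section Main.
Variables (q s gamma : R) (F : C -> C) (a : nat -> C) (Cst : R).
Hypothesis Hq : 0 < q < 1.
Hypothesis Hs : 0 < s < 1.
Hypothesis Hgam : 0 < gamma.
Hypothesis Hbd : forall l : nat, Cmod (a l) <= Cst * s ^ l * Rpower q (INR l ^ 2 / 2).
Hypothesis Hrep : forall x : C, Rabs (Im x) < 1 ->
      exists fx ex : C,
        is_series (fun l => Cmult (a l) (cpow x l)) fx /\
        is_eq (q ^ 2) (Copp (cpow x 2)) ex /\
        F x = Cmult fx ex.
Hypothesis HJ : forall k : nat,
     jackson_integral_is q gamma
       (fun x : R => Cmult (F (RtoC x)) (cpow (RtoC x) (2 * k)%nat)) (RtoC 0).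

Definition PP (t : R) : R := real (Lim_seq (prodR q t)).

Lemma real_strip t : Rabs (Im (RtoC t)) < 1.
Proof. simpl. rewrite Rabs_R0. lra. Qed.

Lemma HP t : is_lim_seq (prodR q t) (PP t).
Proof.
  destruct (Hrep (RtoC t) (real_strip t)) as [fx [ex [_ [[p [Hp _]] _]]]].
  pose proof (C_lim_Re _ _ Hp) as H. 
  assert (H' : is_lim_seq (prodR q t) (Re p)).
  { eapply is_lim_seq_ext; [| exact H]. intros n; cbv beta; rewrite qpoch_real; reflexivity. }
  unfold PP. rewrite (is_lim_seq_unique _ _ H'). exact H'.
Qed.

Lemma F_real t : exists fx, is_series (fun l => Cmult (a l) (cpow (RtoC t) l)) fx /\
  F (RtoC t) = Cmult fx (RtoC (/ PP t)).
Proof.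
  destruct (Hrep (RtoC t) (real_strip t)) as [fx [ex [Hfx [[p [Hp Hex]] HF]]]].
  exists fx. split; auto. rewrite HF, Hex. f_equal.
  assert (HRe : Re p = PP t).
  { pose proof (C_lim_Re _ _ Hp) as H.
    assert (H' : is_lim_seq (prodR q t) (Re p)).
    { eapply is_lim_seq_ext; [| exact H]. intros n; cbv beta; rewrite qpoch_real; reflexivity. }
    pose proof (HP t) as H2. apply is_lim_seq_unique in H'. apply is_lim_seq_unique in H2.
    rewrite H' in H2. injection H2; auto. }
  assert (HIm : Im p = 0).
  { pose proof (C_lim_Im _ _ Hp) as H.
    assert (H' : is_lim_seq (fun _ : nat => 0) (Im p)).
    { eapply is_lim_seq_ext; [| exact H]. intros n; cbv beta; rewrite qpoch_real; reflexivity. }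
    apply is_lim_seq_unique in H'. rewrite Lim_seq_const in H'. injection H'; auto. }
  assert (Ep : p = RtoC (PP t)) by (apply injective_projections; simpl; auto).
  rewrite Ep. pose proof (P_ge1 q PP Hq HP t). symmetry; apply RtoC_inv; lra.
Qed.

Lemma pow_opp_even t j : (- t) ^ (2 * j) = t ^ (2 * j).
Proof. rewrite !pow_mult. f_equal. ring. Qed.

Lemma pow_opp_odd t j : (- t) ^ (2 * j + 1) = - t ^ (2 * j + 1).
Proof. rewrite !pow_add, pow_opp_even. ring. Qed.

Lemma PP_opp t : PP (- t) = PP t.
Proof. unfold PP. f_equal. apply Lim_seq_ext. intros n. induction n. reflexivity.
  cbn [prodR]. rewrite IHn. f_equal. f_equal. f_equal. ring. Qed.

Variable c : C.
Hypothesis Hc : Cmod c <= 1.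

Definition bb (j : nat) : R := 2 * Re (Cmult c (a (2 * j)%nat)).
Definition gg (t : R) : R := Series (fun j => bb j * t ^ (2 * j)).

Lemma Leven t fx fx' :
  is_series (fun l => Cmult (a l) (cpow (RtoC t) l)) fx ->
  is_series (fun l => Cmult (a l) (cpow (RtoC (- t)) l)) fx' ->
  is_series (fun j => bb j * t ^ (2 * j)) (Re (Cmult c (Cplus fx fx'))).
Proof.
  intros H1 H2. pose proof (is_series_plus _ _ _ _ H1 H2) as H3.
  pose proof (is_series_scal c _ _ H3) as H4.
  pose proof (is_series_Re _ _ H4) as H5.
  set (u := fun l => Re (Cmult c (a l)) * (t ^ l + (- t) ^ l)).
  assert (Eu : forall l, Re (Cmult c (Cplus (Cmult (a l) (cpow (RtoC t) l)) (Cmult (a l) (cpow (RtoC (- t)) l)))) = u l).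
  { intros l. unfold u. rewrite !cpow_RtoC. destruct c as [c1 c2]. destruct (a l) as [a1 a2]. simpl. ring. }
  assert (H6 : is_series u (Re (Cmult c (Cplus fx fx')))).
  { eapply isR_ext; [| exact H5]. intros l. rewrite <- Eu. reflexivity. }
  pose proof (even_reindex u _ H6) as H7.
  eapply isR_ext; [| apply H7].
  - intros j. unfold u, bb. rewrite pow_opp_even. ring.
  - intros j. unfold u. rewrite pow_opp_odd. ring.
Qed.

Lemma gg_val t fx fx' :
  is_series (fun l => Cmult (a l) (cpow (RtoC t) l)) fx ->
  is_series (fun l => Cmult (a l) (cpow (RtoC (- t)) l)) fx' ->
  gg t = Re (Cmult c (Cplus fx fx')).
Proof. intros H1 H2. unfold gg. apply is_series_unique. apply Leven; auto. Qed.

Lemma gg_series t : is_series (fun j => bb j * t ^ (2 * j)) (gg t).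
Proof.
  destruct (F_real t) as [fx [H1 _]]. destruct (F_real (- t)) as [fx' [H2 _]].
  rewrite (gg_val t fx fx' H1 H2). apply Leven; auto.
Qed.

Definition hk (k : nat) := fun x : R => Cmult (F (RtoC x)) (cpow (RtoC x) (2 * k)%nat).

Lemma jterm_Re k m :
  Re (Cmult c (jterm q gamma (hk k) m)) =
  (1 - q) * (W q gamma PP m * gg (tt q gamma m) * tt q gamma m ^ (2 * k)).
Proof.
  unfold jterm, W, tt, hk. set (t := jpt q gamma m).
  destruct (F_real t) as [fx [H1 HF1]]. destruct (F_real (- t)) as [fx' [H2 HF2]].
  rewrite (gg_val t fx fx' H1 H2). rewrite HF1, HF2, PP_opp, !cpow_RtoC, pow_opp_even.
  destruct c as [c1 c2]. destruct fx as [f1 f2]. destruct fx' as [g1 g2]. simpl. unfold Rdiv. ring.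
Qed.

Lemma HZ k : zsum (fun m => W q gamma PP m * gg (tt q gamma m) * tt q gamma m ^ (2 * k)) 0.
Proof.
  destruct (HJ k) as [_ Hser].
  pose proof (is_series_Re _ _ (is_series_scal c _ _ Hser)) as H.
  unfold zsum.
  replace 0 with (/ (1 - q) * Re (Cmult c (RtoC 0))) by (destruct c; simpl; ring).
  pose proof (isR_scal _ _ (/ (1 - q)) H) as H'.
  eapply isR_ext; [| exact H']. intros n. cbv beta.
  change (/ (1 - q) * Re (Cmult c (Cplus (jterm q gamma (hk k) (Z.of_nat n)) (jterm q gamma (hk k) (- Z.of_nat (S n))%Z))) =
     W q gamma PP (Z.of_nat n) * gg (tt q gamma (Z.of_nat n)) * tt q gamma (Z.of_nat n) ^ (2 * k) +
     W q gamma PP (- Z.of_nat (S n))%Z * gg (tt q gamma (- Z.of_nat (S n))%Z) * tt q gamma (- Z.of_nat (S n))%Z ^ (2 * k)).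
  rewrite Cmult_plus_distr_l.
  change (Re (Cplus (Cmult c (jterm q gamma (hk k) (Z.of_nat n))) (Cmult c (jterm q gamma (hk k) (- Z.of_nat (S n))%Z))))
    with (Re (Cmult c (jterm q gamma (hk k) (Z.of_nat n))) + Re (Cmult c (jterm q gamma (hk k) (- Z.of_nat (S n))%Z))).
  rewrite !jterm_Re. field. lra.
Qed.

Lemma term_bound k m :
  Rabs (W q gamma PP m * gg (tt q gamma m) * tt q gamma m ^ (2 * k)) <=
  jpt q gamma m * Cmod (hk k (1 * jpt q gamma m)) + jpt q gamma m * Cmod (hk k (-1 * jpt q gamma m)).
Proof.
  pose proof (jterm_Re k m) as E.
  assert (Ht : 0 < jpt q gamma m) by (apply (tt_pos q gamma Hq Hgam)).
  rewrite Rmult_1_l. replace (-1 * jpt q gamma m) with (- jpt q gamma m) by ring.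
  assert (H1 : Rabs (Re (Cmult c (jterm q gamma (hk k) m))) <= (1 - q) * (jpt q gamma m * Cmod (hk k (jpt q gamma m)) + jpt q gamma m * Cmod (hk k (- jpt q gamma m)))).
  { eapply Rle_trans. apply re_le_Cmod. rewrite Cmod_mult. unfold jterm. rewrite Cmod_mult, Cmod_R.
    rewrite Rabs_pos_eq by (apply Rmult_le_pos; lra).
    pose proof (Cmod_triangle (hk k (jpt q gamma m)) (hk k (- jpt q gamma m))).
    pose proof (Cmod_ge_0 (Cplus (hk k (jpt q gamma m)) (hk k (- jpt q gamma m)))).
    assert (0 <= (1 - q) * jpt q gamma m) by (apply Rmult_le_pos; lra).
    pose proof (Cmod_ge_0 c).
    apply Rle_trans with (1 * ((1 - q) * jpt q gamma m * Cmod (Cplus (hk k (jpt q gamma m)) (hk k (- jpt q gamma m))))).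
    apply Rmult_le_compat_r; [apply Rmult_le_pos; auto| auto].
    rewrite Rmult_1_l. replace ((1 - q) * (jpt q gamma m * Cmod (hk k (jpt q gamma m)) + jpt q gamma m * Cmod (hk k (- jpt q gamma m))))
      with ((1 - q) * jpt q gamma m * (Cmod (hk k (jpt q gamma m)) + Cmod (hk k (- jpt q gamma m)))) by ring.
    apply Rmult_le_compat_l; auto. }
  rewrite E, Rabs_mult, Rabs_pos_eq in H1 by lra.
  apply (Rmult_le_reg_l (1 - q)); lra.
Qed.

Lemma HNULL k : znull (fun m => W q gamma PP m * gg (tt q gamma m) * tt q gamma m ^ (2 * k)).
Proof.
  destruct (HJ k) as [Habs _].
  destruct (Habs 1 (or_introl eq_refl)) as [A1 A2].
  destruct (Habs (-1) (or_intror eq_refl)) as [B1 B2].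
  apply ex_series_lim_0 in A1. apply ex_series_lim_0 in A2. apply ex_series_lim_0 in B1. apply ex_series_lim_0 in B2.
  set (u := fun m => W q gamma PP m * gg (tt q gamma m) * tt q gamma m ^ (2 * k)).
  assert (Sq : forall (v w : nat -> R), (forall n, Rabs (v n) <= w n) -> is_lim_seq w 0 -> is_lim_seq v 0).
  { intros v w Hvw Hw. apply (is_lim_seq_le_le (fun n => - w n) v w).
    intros n. pose proof (Hvw n). apply Rabs_le_between in H. lra.
    replace (Finite 0) with (Rbar_opp 0) by (simpl; f_equal; ring). apply -> is_lim_seq_opp. auto. auto. }
  split.
  - apply (Sq _ _ (fun n => term_bound k (Z.of_nat n))).
    replace (Finite 0) with (Finite (0 + 0)) by (f_equal; ring). apply is_lim_seq_plus'; auto.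
  - apply is_lim_seq_incr_1.
    apply (Sq _ _ (fun n => term_bound k (- Z.of_nat (S n))%Z)).
    replace (Finite 0) with (Finite (0 + 0)) by (f_equal; ring). apply is_lim_seq_plus'; auto.
Qed.

Lemma bb_bound j : Rabs (bb j) <= 2 * Cst * q ^ (2 * j * j).
Proof.
  unfold bb. rewrite Rabs_mult, Rabs_pos_eq by lra.
  pose proof (Hbd (2 * j)%nat) as H. pose proof (re_le_Cmod (Cmult c (a (2 * j)%nat))) as H1.
  rewrite Cmod_mult in H1. pose proof (Cmod_ge_0 (a (2 * j)%nat)).
  assert (E : Rpower q (INR (2 * j) ^ 2 / 2) = q ^ (2 * j * j)).
  { rewrite <- (Rpower_pow (2 * j * j) q) by (destruct Hq; assumption). f_equal. rewrite !mult_INR. simpl. field. }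
  rewrite E in H.
  assert (Hs2 : s ^ (2 * j) <= 1) by (apply pow_le_one_r; lra).
  assert (0 <= q ^ (2 * j * j)) by (apply pow_le; lra).
  assert (HC : 0 <= Cst).
  { pose proof (Hbd 0%nat) as Hb0. pose proof (Cmod_ge_0 (a 0%nat)). simpl in Hb0.
    replace (0 * (0 * 1) / 2) with 0 in Hb0 by field. rewrite Rpower_O in Hb0 by (destruct Hq; assumption). lra. }
  assert (Cmod c * Cmod (a (2 * j)%nat) <= Cmod (a (2 * j)%nat)).
  { pose proof (Cmod_ge_0 c). nra. }
  assert (Cst * s ^ (2 * j) * q ^ (2 * j * j) <= Cst * q ^ (2 * j * j)).
  { apply Rmult_le_compat_r; auto. rewrite <- (Rmult_1_r Cst) at 2. apply Rmult_le_compat_l; auto. }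
  lra.
Qed.

Lemma even_coef_zero j : Re (Cmult c (a (2 * j)%nat)) = 0.
Proof.
  pose proof (core_main q gamma PP Hq Hgam HP bb gg (2 * Cst) bb_bound gg_series HZ HNULL j) as H.
  unfold bb in H. lra.
Qed.
End Main.


Lemma cpow_opp_even x j : cpow (Copp x) (2 * j) = cpow x (2 * j).
Proof. induction j. reflexivity. replace (2 * S j)%nat with (S (S (2 * j))) by lia.
  cbn [cpow]. rewrite IHj. ring. Qed.

Lemma cpow_opp_odd x j : cpow (Copp x) (2 * j + 1) = Copp (cpow x (2 * j + 1)).
Proof. replace (2 * j + 1)%nat with (S (2 * j)) by lia. cbn [cpow]. rewrite cpow_opp_even. ring. Qed.

Theorem lemma5p9 (q s gamma : R) (F : C -> C) :
  0 < q < 1 ->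
  0 < s < 1 ->
  in_M q s F ->
  (forall x : C, Rabs (Im x) < 1 -> F (Copp x) = F x) ->
  0 < gamma ->
  (forall k : nat,
     jackson_integral_is q gamma
       (fun x : R => Cmult (F (RtoC x)) (cpow (RtoC x) (2 * k)%nat)) (RtoC 0)) ->
  forall x : C, Rabs (Im x) < 1 -> F x = RtoC 0.
Proof.
  intros Hq Hs HM Heven Hg HJ x Hx.
  destruct HM as [a [Cst [HC [Hbd Hrep]]]].
  assert (Ha : forall j, a (2 * j)%nat = RtoC 0).
  { intros j.
    assert (Hc1 : Cmod (RtoC 1) <= 1) by (rewrite Cmod_1; lra).
    assert (Hc2 : Cmod (0, -1) <= 1).
    { unfold Cmod. simpl. replace (0 * (0 * 1) + -1 * (-1 * 1)) with 1 by ring. rewrite sqrt_1. lra. }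
    pose proof (even_coef_zero q s gamma F a Cst Hq Hs Hg Hbd Hrep HJ (RtoC 1) Hc1 j) as H1.
    pose proof (even_coef_zero q s gamma F a Cst Hq Hs Hg Hbd Hrep HJ (0, -1) Hc2 j) as H2.
    destruct (a (2 * j)%nat) as [u v]. simpl in H1, H2.
    apply injective_projections; simpl; lra. }
  assert (Hx' : Rabs (Im (Copp x)) < 1) by (destruct x; simpl; rewrite Rabs_Ropp; auto).
  destruct (Hrep x Hx) as [fx [ex [H1 [H2 H3]]]].
  destruct (Hrep (Copp x) Hx') as [fx' [ex' [H1' [H2' H3']]]].
  assert (Eex : ex' = ex).
  { replace (cpow (Copp x) 2) with (cpow x 2) in H2' by (simpl; ring).
    destruct H2 as [p [Hp Ep]]. destruct H2' as [p' [Hp' Ep']].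
    rewrite Ep, Ep'. f_equal. exact (C_lim_unique _ _ _ Hp' Hp). }
  assert (Efx : fx' = Copp fx).
  { assert (H4 : is_series (fun l => Cmult (a l) (cpow (Copp x) l)) (Copp fx)).
    { pose proof (is_series_opp _ _ H1) as H5.
      eapply is_series_ext; [| exact H5]. intros l. simpl.
      destruct (Nat.Even_or_Odd l) as [[j Hj]|[j Hj]]; subst l.
      - rewrite Ha. change (opp (Cmult 0 (cpow x (2 * j))) = Cmult 0 (cpow (Copp x) (2 * j))).
        unfold opp; simpl. ring.
      - rewrite cpow_opp_odd. change (Copp (Cmult (a (2 * j + 1)%nat) (cpow x (2 * j + 1))) = Cmult (a (2 * j + 1)%nat) (Copp (cpow x (2 * j + 1)))). ring. }
    exact (C_lim_unique _ _ _ H1' H4). }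
  pose proof (Heven x Hx) as HE.
  rewrite H3', H3, Eex, Efx in HE.
  rewrite H3. 
  destruct fx as [f1 f2]. destruct ex as [e1 e2]. simpl in HE.
  injection HE as E1 E2. apply injective_projections; simpl; lra.
Qed.
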